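(* Let $G$ be an $s$ clique-uniform graph of order $n$ with respect to a clique partition $F$ with $|F|=k$, and let $P_G$ be its clique partition graph. (i) If $k<n$, then $\mathcal E(P_G)\le\mathcal E(\mathcal Q_F)+\frac{2ks}{n}-2s$. (ii) If $k>n$, then $\mathcal E(P_G)\ge\mathcal E(\mathcal Q_F)+\frac{2ks}{n}-2s$. (iii) If $k=n$, then $\mathcal E(P_G)=\mathcal E(\mathcal Q_F)$.
   Context: All graphs are finite and simple, $V(G)=\{1,\dots,n\}$. A clique partition of $G$ is a set $F=\{C_1,\dots,C_k\}$ of cliques such that every edge lies in exactly one $C_j$; $G$ is $s$ clique-uniform if $|C_j|=s$ for all $j$. $\mathcal M_F$ is the $n\times k$ $(0,1)$-matrix with $(i,j)$-entry $1$ iff $i\in C_j$, and $\mathcal Q_F=\mathcal M_F\mathcal M_F^T$. The clique-degree $t_i^F$ is the number of cliques of $F$ containing $i$. $\mathcal E(\mathcal Q_F)=\sum_{i=1}^n|\lambda_i(\mathcal Q_F)-\bar t|$ with $\bar t=\frac1n\sum_i t_i^F$. The clique partition graph $P_G$ has vertex set $\{1,\dots,k\}$ with $i\ne j$ adjacent iff $C_i\cap C_j\ne\emptyset$, and $\mathcal E(P_G)$ is the sum of absolute values of its adjacency eigenvalues. *)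

(* Defs.v *)
(* Eigenvalues are taken in algC (algebraically closed),
   as the roots with multiplicity of the characteristic polynomial. *)
From HB Require Import structures.
From mathcomp Require Import all_boot all_order all_algebra all_field.
Set Implicit Arguments. Unset Strict Implicit. Unset Printing Implicit Defensive.
Import Order.TTheory GRing.Theory Num.Theory.
Local Open Scope ring_scope.

Definition simple_graph (n : nat) (e : rel 'I_n) : Prop :=
  symmetric e /\ irreflexive e.

Definition is_clique (n : nat) (e : rel 'I_n) (C : {set 'I_n}) : Prop :=
  forall x y, x \in C -> y \in C -> x != y -> e x y.

(* F = {C_1,...,C_k} given by an injective enumeration C : 'I_k -> {set 'I_n}. *)
Definition clique_partition (n k : nat) (e : rel 'I_n)
  (C : 'I_k -> {set 'I_n}) : Prop :=
  injective C /\ (forall j, is_clique e (C j)) /\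
  (forall x y, e x y -> exists! j, x \in C j /\ y \in C j).

Definition clique_uniform (n k s : nat) (C : 'I_k -> {set 'I_n}) : Prop :=
  forall j, #|C j| = s.

Definition incM (n k : nat) (C : 'I_k -> {set 'I_n}) : 'M[algC]_(n, k) :=
  \matrix_(i < n, j < k) ((i \in C j)%:R).

Definition QF (n k : nat) (C : 'I_k -> {set 'I_n}) : 'M[algC]_n :=
  incM C *m (incM C)^T.

Definition clique_degree (n k : nat) (C : 'I_k -> {set 'I_n}) (i : 'I_n) : nat :=
  #|[set j | i \in C j]|.

Definition tbar (n k : nat) (C : 'I_k -> {set 'I_n}) : algC :=
  (\sum_(i < n) clique_degree C i)%:R / n%:R.

Definition PG_adj (n k : nat) (C : 'I_k -> {set 'I_n}) : 'M[algC]_k :=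
  \matrix_(i < k, j < k) ((i != j) && (C i :&: C j != set0))%:R.

Lemma char_poly_splits (m : nat) (A : 'M[algC]_m) :
  exists r : seq algC, char_poly A == \prod_(z <- r) ('X - z%:P).
Proof.
have [r Hr] := closed_field_poly_normal (char_poly A).
exists r; apply/eqP; rewrite {1}Hr (monicP (char_poly_monic A)) scale1r //.
Qed.

Definition eigs (m : nat) (A : 'M[algC]_m) : seq algC := xchoose (char_poly_splits A).

Definition energy_shift (m : nat) (A : 'M[algC]_m) (c : algC) : algC :=
  \sum_(l <- eigs A) `|l - c|.

Definition graph_energy (m : nat) (A : 'M[algC]_m) : algC := energy_shift A 0.

(* Main.v *)
Require Import Defs.
From HB Require Import structures.
From mathcomp Require Import all_boot all_order all_algebra all_field.
From mathcomp Require Import ring lra.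
Set Implicit Arguments. Unset Strict Implicit. Unset Printing Implicit Defensive.
Import Order.TTheory GRing.Theory Num.Theory Num.Def.
Local Open Scope ring_scope.

Lemma eigsP m (A : 'M[algC]_m) : char_poly A = \prod_(z <- eigs A) ('X - z%:P).
Proof. exact/eqP/(xchooseP (char_poly_splits A)). Qed.

Lemma size_eigs m (A : 'M[algC]_m) : size (eigs A) = m.
Proof.
have := size_char_poly A; rewrite eigsP size_prod_XsubC.
by case.
Qed.

Lemma prod_nseq0 m : \prod_(z <- nseq m (0:algC)) ('X - z%:P) = 'X^m.
Proof.
elim: m => [|m IH]; first by rewrite big_nil expr0.
by rewrite /= big_cons IH subr0 exprS.
Qed.

Lemma eigs_shift m (A : 'M[algC]_m) c :
  perm_eq (eigs A) (map (fun x => x - c) (eigs (A + c%:M))).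
Proof.
apply: prod_XsubC_eq; rewrite big_map -eigsP.
have := det_map_mx (comp_poly ('X + c%:P)) (char_poly_mx (A + c%:M)).
have -> : map_mx (comp_poly ('X + c%:P)) (char_poly_mx (A + c%:M)) = char_poly_mx A.
  apply/matrixP => i j; rewrite !mxE.
  have [->|ne] := eqVneq i j.
    rewrite !mulr1n comp_polyB comp_polyX comp_polyC polyCD.
    by rewrite opprD addrACA subrr addr0.
  by rewrite !mulr0n addr0 sub0r raddfN /= comp_polyC.
rewrite -/(char_poly _) -/(char_poly _) => ->.
rewrite eigsP rmorph_prod; apply: eq_bigr => z _.
by rewrite /= comp_polyB comp_polyX comp_polyC polyCB opprB addrA.
Qed.
Lemma sylvester (R : comNzRingType) (n k : nat) (M : 'M[R]_(n, k)) (N : 'M[R]_(k, n)) :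
  'X^k * char_poly (M *m N) = 'X^n * char_poly (N *m M).
Proof.
pose Mp := map_mx (@polyC R) M; pose Np := map_mx (@polyC R) N.
pose L := block_mx ('X%:M : 'M_n) Mp Np (1%:M : 'M_k).
have h1 : \det L = char_poly (M *m N).
  have -> : L = block_mx ('X%:M - Mp *m Np) Mp 0 1%:M *m block_mx 1%:M 0 Np 1%:M.
    rewrite mulmx_block ?mulmx0 ?mulmx1 ?mul1mx ?add0r ?addr0 ?mulNmx ?subrK /L //.
  by rewrite (@det_mulmx {poly R}) det_ublock det_lblock !det1 !mulr1 /char_poly /char_poly_mx map_mxM.
have h2 : block_mx (1%:M : 'M_n) 0 0 ('X%:M : 'M_k) *m L =
    block_mx 1%:M 0 Np 1%:M *m block_mx ('X%:M) Mp 0 ('X%:M - Np *m Mp).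
  rewrite !mulmx_block !mulmx0 !mul0mx !mulmx1 !mul1mx !add0r !addr0.
  by rewrite mul_mx_scalar mul_scalar_mx addrC subrK.
have := congr1 determinant h2.
rewrite !det_mulmx det_ublock det_lblock !det_ublock !det1 !det_scalar mul1r mul1r h1.
rewrite /char_poly /char_poly_mx map_mxM -/Mp -/Np => ->.
by rewrite mul1r map_mxM.
Qed.

Lemma eigs_sylv n k (M : 'M[algC]_(n, k)) (N : 'M[algC]_(k, n)) :
  perm_eq (eigs (M *m N) ++ nseq k 0) (eigs (N *m M) ++ nseq n 0).
Proof.
apply: prod_XsubC_eq; rewrite !big_cat /= !prod_nseq0 -!eigsP.
by rewrite mulrC sylvester mulrC.
Qed.

Lemma sum_eigs m (A : 'M[algC]_m) : (0 < m)%N -> \sum_(z <- eigs A) z = \tr A.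
Proof.
move=> m0; have := char_poly_trace A m0.
rewrite eigsP; have {2}<- := size_eigs A.
by rewrite coefPn_prod_XsubC ?size_eigs -?lt0n // => /oppr_inj.
Qed.

Definition nrm p (u : 'rV[algC]_p) := (u *m (map_mx conjC u)^T) 0 0.

Lemma nrmE p (u : 'rV[algC]_p) : nrm u = \sum_i `|u 0 i| ^+ 2.
Proof. by rewrite /nrm mxE; apply: eq_bigr => i _; rewrite !mxE normCK. Qed.

Lemma nrm_ge0 p (u : 'rV[algC]_p) : 0 <= nrm u.
Proof. by rewrite nrmE; apply: sumr_ge0 => i _; rewrite exprn_ge0. Qed.

Lemma nrm_gt0 p (u : 'rV[algC]_p) : u != 0 -> 0 < nrm u.
Proof.
move=> un0; have [i ui] : exists i, u 0 i != 0.
  apply/existsP; apply: contraR un0 => /existsPn H.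
  by apply/eqP/rowP => i; rewrite mxE; apply/eqP; move: (H i); rewrite negbK.
rewrite nrmE (bigD1 i) //=; apply: ltr_pwDl.
  by rewrite exprn_gt0 ?normr_gt0.
by apply: sumr_ge0 => j _; rewrite exprn_ge0.
Qed.

Lemma eigs_psd n k (N : 'M[algC]_(n, k)) : map_mx conjC N = N ->
  forall x, x \in eigs (N^T *m N) -> 0 <= x.
Proof.
move=> HN x xin.
have : root (char_poly (N^T *m N)) x by rewrite eigsP root_prod_XsubC.
rewrite -eigenvalue_root_char => /eigenvalueP [v Hv vn0].
have E : x * nrm v = nrm (v *m N^T).
  rewrite /nrm.
  have -> : map_mx conjC (v *m N^T) = map_mx conjC v *m N^T.
    by rewrite map_mxM -map_trmx HN.
  rewrite trmx_mul trmxK !mulmxA -(mulmxA v N^T N) Hv -scalemxAl [RHS]mxE.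
  done.

have := nrm_gt0 vn0 => hv.
have -> : x = nrm (v *m N^T) / nrm v by rewrite -E mulfK // gt_eqF.
by rewrite divr_ge0 ?nrm_ge0 // ltW.
Qed.

Lemma sum_nseq (F : algC -> algC) m a : \sum_(x <- nseq m a) F x = F a *+ m.
Proof. by elim: m => [|m IH]; rewrite ?big_nil // big_cons IH mulrS. Qed.

Lemma sum_const_seq (r : seq algC) (c : algC) : \sum_(x <- r) c = c *+ size r.
Proof. by elim: r => [|x r IH]; rewrite ?big_nil // big_cons IH mulrS. Qed.

Lemma sum_le_pick (r : seq algC) (f g : algC -> algC) x0 d :
  x0 \in r -> (forall x, f x <= g x) -> f x0 + d <= g x0 ->
  \sum_(x <- r) f x + d <= \sum_(x <- r) g x.
Proof.
move=> x0r fg h0.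
rewrite (perm_big _ (perm_to_rem x0r)) [X in _ <= X](perm_big _ (perm_to_rem x0r)) !big_cons.
rewrite -addrA (addrC _ d) addrA; apply: lerD => //.
by apply: ler_sum => x _.
Qed.

Lemma sum_lt (r : seq algC) a : (0 < size r)%N -> (forall x, x \in r -> x < a) ->
  \sum_(x <- r) x < a *+ size r.
Proof.
elim: r => [|x r IH] //= _ H.
rewrite big_cons mulrS; case: r IH H => [|y r] IH H.
  by rewrite big_nil addr0 mulr0n addr0 H ?mem_head.
apply: ltrD; first by rewrite H ?mem_head.
apply: IH => // z zr; apply: H; by rewrite in_cons zr orbT.
Qed.

Lemma exists_ge (r : seq algC) a : (0 < size r)%N -> (forall x, x \in r -> 0 <= x) ->
  0 <= a -> \sum_(x <- r) x = a *+ size r -> exists2 x, x \in r & a <= x.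
Proof.
move=> r0 rpos a0 Hs.
case: (boolP (has (fun x => a <= x) r)) => [/hasP [x xr ax]|/hasPn H]; first by exists x.
have hlt : \sum_(x <- r) x < a *+ size r.
  apply: sum_lt r0 _ => x xr; rewrite real_ltNge; [exact: H xr | exact: ger0_real (rpos _ xr) | exact: ger0_real a0].
by rewrite Hs ltxx in hlt.
Qed.

Lemma sum_indicator (T : finType) (A : {set T}) :
  \sum_x ((x \in A)%:R : algC) = #|A|%:R.
Proof.
rewrite -sum1_card natr_sum [RHS]big_mkcond; apply: eq_bigr => x _.
by case: (x \in A).
Qed.

Lemma incM_real n k (C : 'I_k -> {set 'I_n}) : map_mx conjC (incM C) = incM C.
Proof. by apply/matrixP => i j; rewrite !mxE rmorph_nat. Qed.

Lemma BE n k (C : 'I_k -> {set 'I_n}) i j :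
  ((incM C)^T *m incM C) i j = #|C i :&: C j|%:R.
Proof.
rewrite mxE -sum_indicator; apply: eq_bigr => v _.
by rewrite !mxE -natrM mulnb inE.
Qed.

Lemma QE n k (C : 'I_k -> {set 'I_n}) i :
  (QF C) i i = (clique_degree C i)%:R.
Proof.
rewrite /QF mxE /clique_degree -sum_indicator; apply: eq_bigr => j _.
by rewrite !mxE -natrM mulnb andbb inE.
Qed.

Lemma inter_le1 n k (e : rel 'I_n) (C : 'I_k -> {set 'I_n}) :
  clique_partition e C -> forall i j, i != j -> (#|C i :&: C j| <= 1)%N.
Proof.
move=> [Cinj [Ccl Cu]] i j ij; rewrite leqNgt; apply/card_gt1P => [[x [y [xI yI xy]]]].
move: xI yI; rewrite !inE => /andP [xi xj] /andP [yi yj].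
have exy := Ccl i x y xi yi xy.
have [j' [_ U]] := Cu x y exy.
have e1 := U i (conj xi yi); have e2 := U j (conj xj yj).
by move: ij; rewrite -e1 -e2 eqxx.
Qed.

Lemma BA n k s (e : rel 'I_n) (C : 'I_k -> {set 'I_n}) :
  clique_partition e C -> clique_uniform s C ->
  PG_adj C + (s%:R : algC)%:M = (incM C)^T *m incM C.
Proof.
move=> HF Hu; apply/matrixP => i j; rewrite BE !mxE.
have [<-|ij] := eqVneq i.
  by rewrite /= add0r mulr1n setIid Hu.
rewrite /= mulr0n addr0.
have := inter_le1 HF ij; rewrite -cards_eq0.
by case: #|_| => [|[|]].
Qed.


Unset Implicit Arguments.
Theorem mainTheorem11 (n k s : nat) (e : rel 'I_n) (C : 'I_k -> {set 'I_n})
  (He : simple_graph e) (HF : clique_partition e C) (Hu : clique_uniform s C)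
  (Hk : (0 < k)%N) :
  let EP := graph_energy (PG_adj C) in
  let EQ := energy_shift (QF C) (tbar C) in
  let c := (2 * k * s)%:R / n%:R - (2 * s)%:R in
  ((k < n)%N -> EP <= EQ + c) /\
  ((n < k)%N -> EP >= EQ + c) /\
  (k = n -> EP = EQ).
Proof.
move=> EP EQ c.
set M := incM C.
have Mr : map_mx conjC M = M := incM_real C.
have trB : \tr (M^T *m M) = (k * s)%:R.
  rewrite /mxtrace (eq_bigr (fun _ => (s%:R : algC))); last first.
    by move=> i _; rewrite BE setIid Hu.
  by rewrite sumr_const card_ord mulnC natrM mulr_natr.
have Ht : tbar C = (k * s)%:R / n%:R.
  rewrite /tbar -trB -mxtrace_mulC /mxtrace natr_sum; congr (_ / _).
  by apply: eq_bigr => i _; rewrite QE.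
set t := tbar C in EQ Ht *.
set lam := eigs (M^T *m M).
set mu := eigs (QF C).
have Hal : perm_eq (eigs (PG_adj C)) (map (fun x => x - s%:R) lam).
  by have := eigs_shift (PG_adj C) s%:R; rewrite (BA HF Hu).
have Hsyl : perm_eq (mu ++ nseq k 0) (lam ++ nseq n 0) := eigs_sylv M M^T.
have lam0 : forall x, x \in lam -> 0 <= x := eigs_psd Mr.
have mu0 : forall y, y \in mu -> 0 <= y.
  move=> y ymu; have : y \in lam ++ nseq n 0.
    by rewrite -(perm_mem Hsyl) mem_cat ymu.
  rewrite mem_cat mem_nseq => /orP [/lam0 //|/andP [_ /eqP ->]] //.
have sizelam : size lam = k := size_eigs _.
have sizemu : size mu = n := size_eigs _.
have sumlam : \sum_(x <- lam) x = (k * s)%:R by rewrite sum_eigs.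
have summu : \sum_(y <- mu) y = (k * s)%:R.
  have : \sum_(y <- mu ++ nseq k 0) y = \sum_(x <- lam ++ nseq n 0) x.
    exact: perm_big.
  by rewrite !big_cat /= !sum_nseq !mul0rn !addr0 sumlam.
have Eq2 : forall d, \sum_(y <- mu) `|y - d| + `|d| *+ k = \sum_(x <- lam) `|x - d| + `|d| *+ n.
  move=> d.
  have : \sum_(y <- mu ++ nseq k 0) `|y - d| = \sum_(x <- lam ++ nseq n 0) `|x - d|.
    exact: perm_big.
  by rewrite !big_cat /= !sum_nseq sub0r normrN.
have HEP : EP = \sum_(x <- lam) `|x - s%:R|.
  rewrite /EP /graph_energy /energy_shift (perm_big _ Hal) big_map.
  by apply: eq_bigr => x _; rewrite subr0.
have HEQ : EQ = \sum_(y <- mu) `|y - t| by [].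
have s0 : 0 <= (s%:R : algC) by rewrite ler0n.
split; [|split].
- move=> kn.
  have n0 : (n%:R : algC) != 0 by rewrite pnatr_eq0 -lt0n (leq_trans _ kn).
  have t0 : 0 <= t by rewrite Ht divr_ge0 ?ler0n.
  have ts : t <= s%:R.
    rewrite Ht ler_pdivrMr ?ltr0n ?(leq_trans _ kn) // -natrM ler_nat mulnC.
    by rewrite leq_mul2l ltnW ?orbT.
  have [x0 x0l sx0] : exists2 x, x \in lam & s%:R <= x.
    by apply: exists_ge => //; rewrite ?sizelam // sumlam natrM mulr_natl.
  have H := @sum_le_pick lam (fun x => `|x - s%:R|) (fun x => `|x - t| + (s%:R - t)) x0
     ((s%:R - t) *+ 2) x0l.
  have {}H : \sum_(x <- lam) `|x - s%:R| + (s%:R - t) *+ 2 <=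
      \sum_(x <- lam) (`|x - t| + (s%:R - t)).
    apply: H; last first.
      rewrite !ger0_norm ?subr_ge0 ?(le_trans ts) //.
      by rewrite le_eqVlt; apply/orP; left; apply/eqP; ring.
    move=> x; apply: le_trans (ler_distD t x s%:R) _.
    by rewrite [`|t - _|]distrC [`|s%:R - t|]ger0_norm ?subr_ge0.
  rewrite big_split /= sum_const_seq sizelam in H.
  have E2 := Eq2 t; rewrite ger0_norm // in E2.
  have Hc : c = t *+ 2 - (s%:R) *+ 2 by rewrite /c Ht !natrM; field.
  have HQ : EQ = \sum_(x <- lam) `|x - t| + t *+ n - t *+ k by rewrite HEQ -E2 addrK.
  rewrite HEP HQ Hc -(lerD2r ((s%:R - t) *+ 2)); apply: (le_trans H).
  rewrite le_eqVlt; apply/orP; left; apply/eqP; rewrite Ht; field; done.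
- move=> nk; have [n0|npos] := posnP n.
    have -> : EQ = 0.
      by rewrite HEQ (size0nil (_ : size mu = 0%N)) ?big_nil // sizemu n0.
    rewrite /c n0 invr0 mulr0 !add0r; apply: (@le_trans _ _ 0).
      by rewrite oppr_le0 ler0n.
    by rewrite HEP; apply: sumr_ge0 => x _; exact: normr_ge0.
  have n0 : (n%:R : algC) != 0 by rewrite pnatr_eq0 -lt0n.
  have st : (s%:R : algC) <= t.
    rewrite Ht ler_pdivlMr ?ltr0n // -natrM ler_nat mulnC.
    by rewrite leq_mul2r ltnW ?orbT.
  have t0 : 0 <= t := le_trans s0 st.
  have [y0 y0m ty0] : exists2 y, y \in mu & t <= y.
    apply: exists_ge => //; rewrite ?sizemu //.
    by rewrite summu Ht -[RHS]mulr_natr divfK.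
  have H := @sum_le_pick mu (fun y => `|y - t|) (fun y => `|y - s%:R| + (t - s%:R)) y0
     ((t - s%:R) *+ 2) y0m.
  have {}H : \sum_(y <- mu) `|y - t| + (t - s%:R) *+ 2 <=
      \sum_(y <- mu) (`|y - s%:R| + (t - s%:R)).
    apply: H; last first.
      rewrite !ger0_norm ?subr_ge0 ?(le_trans st) //.
      by rewrite le_eqVlt; apply/orP; left; apply/eqP; ring.
    move=> y; apply: le_trans (ler_distD s%:R y t) _.
    by rewrite [`|s%:R - t|]distrC [`|t - s%:R|]ger0_norm ?subr_ge0.
  rewrite big_split /= sum_const_seq sizemu in H.
  have E2 := Eq2 s%:R; rewrite ger0_norm // in E2.
  have HP : \sum_(y <- mu) `|y - s%:R| = EP + s%:R *+ n - s%:R *+ k.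
    by rewrite HEP -E2 addrK.
  rewrite HEQ (_ : c = (t - s%:R) *+ 2); last by rewrite /c Ht !natrM; field.
  apply: (le_trans H); rewrite HP.
  rewrite le_eqVlt; apply/orP; left; apply/eqP; rewrite Ht; field; done.
- move=> kn.
  have ts : t = s%:R.
    rewrite Ht -kn natrM; field; by rewrite pnatr_eq0 -lt0n.
  rewrite kn perm_cat2r in Hsyl.
  by rewrite HEP HEQ ts; apply: perm_big; rewrite perm_sym.
Qed.
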